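(* Fix an integer $\overline{m}\geq 1$, put $m=2\overline{m}$, and let $G_3=(\{1,2,3\},A,1,2)$ be the doubly-rooted digraph with roots $s=1$, $t=2$ and edges $a_1,\dots,a_{m+7}$, where (writing $a_x=(i,j)$ for $a_x^-=i$, $a_x^+=j$) $a_{2\ell-1}=(1,2)$, $a_{2\ell}=(2,1)$ for $\ell=1,\dots,\overline{m}$, $a_{m+1}=(1,1)$, $a_{m+2}=(1,2)$, $a_{m+3}=(2,3)$, $a_{m+4}=(3,1)$, $a_{m+5}=(1,3)$, $a_{m+6}=(3,2)$, $a_{m+7}=(3,3)$. Let $B=\{a_1,\dots,a_m\}$. Then, with respect to the enumeration $(a_1,\dots,a_{m+7})$, $S(G_3,B)=\tfrac{2}{3}\,\overline{m}\,(\overline{m}+2)!\,\overline{m}!$.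
   Context: For a doubly-rooted digraph $G=(V,A,s,t)$ (each edge $a$ has source $a^-$, target $a^+$; loops and multiple edges allowed) with enumeration $A=\{a_1,\dots,a_k\}$ and $B\subseteq A$: $M(B)=\{j\in[k]:a_j\in B\}$; $P(G)=\{\sigma\in\mathfrak{S}_k: a_{\sigma(1)}^-=s,\ a_{\sigma(k)}^+=t,\ a_{\sigma(j+1)}^-=a_{\sigma(j)}^+\ \forall j\in[k-1]\}$; for $M=\{j_1<\dots<j_\ell\}\subseteq[k]$, $\sigma_M\in\mathfrak{S}_\ell$ is $\sigma_M(g)=|\{h\in[\ell]:\sigma(j_h)\le\sigma(j_g)\}|$; $S(G,B)=\sum_{\sigma\in P(G)}\mathrm{sgn}(\sigma)\mathrm{sgn}(\sigma_{M(B)})$. *)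

(* Defs.v *)
From mathcomp Require Import all_boot all_order all_algebra all_fingroup.
Set Implicit Arguments. Unset Strict Implicit. Unset Printing Implicit Defensive.
Import GRing.Theory Num.Theory.
Local Open Scope ring_scope.

(* A doubly-rooted digraph with k enumerated edges a_0,...,a_{k-1} (0-based
   indices for the paper's a_1,...,a_k): src j = a_j^-, tgt j = a_j^+. *)
Record drgraph (V : finType) (k : nat) := DRGraph {
  src : 'I_k -> V;
  tgt : 'I_k -> V;
  sroot : V;
  troot : V }.

(* P(G): permutations sigma (position -> edge) forming an Eulerian trail
   from s to t. Positions are 0-based. *)
Definition Ptrail (V : finType) (k : nat) (G : drgraph V k) (sigma : 'S_k) : bool :=
  [forall p : 'I_k, (val p == 0%N) ==> (src G (sigma p) == sroot G)] &&
  [forall p : 'I_k, (val p == k.-1) ==> (tgt G (sigma p) == troot G)] &&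
  [forall p : 'I_k, forall q : 'I_k,
     (val q == (val p).+1) ==> (src G (sigma q) == tgt G (sigma p))].

Definition perm_of_fun (n : nat) (f : 'I_n -> 'I_n) : 'S_n :=
  match injectiveP f with
  | ReflectT H => perm H
  | ReflectF _ => 1%g
  end.

(* sigma_M, for M = {j_1 < ... < j_l}: the relative order on M of the values
   tau(j) (0-based rank).  enum_val of a set of ordinals lists it increasingly. *)
Definition restr_rank (k : nat) (tau : 'S_k) (M : {set 'I_k}) : 'S_#|M| :=
  perm_of_fun (fun g : 'I_#|M| =>
    insubd g (#|[set h : 'I_#|M| | (val (tau (enum_val h)) <= val (tau (enum_val g)))%N]|.-1)).

Definition sgnp (k : nat) (s : 'S_k) : int := (-1) ^+ odd_perm s.

(* S(G,B) = sum_{sigma in P(G)} sgn(sigma) sgn(sigma_{M(B)}).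
   READING: sigma_M is computed from sigma^{-1}
   (edge -> position), i.e. from the positions of the edges of B in the trail. *)
Definition Ssum (V : finType) (k : nat) (G : drgraph V k) (B : {set 'I_k}) : int :=
  \sum_(sigma : 'S_k | Ptrail G sigma) sgnp sigma * sgnp (restr_rank (sigma^-1)%g B).

(* The graph G_3 for mbar, with m = 2 mbar, vertices 1,2,3 as 'I_3 = {0,1,2},
   k = m + 7 edges. Edge index x (0-based) is the paper's a_{x+1}. *)
Definition V1 : 'I_3 := inord 0.
Definition V2 : 'I_3 := inord 1.
Definition V3 : 'I_3 := inord 2.

Definition G3_src (mb : nat) (x : 'I_(2 * mb + 7)) : 'I_3 :=
  let m := (2 * mb)%N in
  if (val x < m)%N then (if odd (val x) then V2 else V1)
  else match (val x - m)%N with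
       | 0 => V1 | 1 => V1 | 2 => V2 | 3 => V3 | 4 => V1 | 5 => V3 | _ => V3 end.

Definition G3_tgt (mb : nat) (x : 'I_(2 * mb + 7)) : 'I_3 :=
  let m := (2 * mb)%N in
  if (val x < m)%N then (if odd (val x) then V1 else V2)
  else match (val x - m)%N with
       | 0 => V1 | 1 => V2 | 2 => V3 | 3 => V1 | 4 => V3 | 5 => V2 | _ => V3 end.

Definition G3 (mb : nat) : drgraph 'I_3 (2 * mb + 7) :=
  DRGraph (G3_src (mb:=mb)) (G3_tgt (mb:=mb)) V1 V2.

Definition B3 (mb : nat) : {set 'I_(2 * mb + 7)} :=
  [set x : 'I_(2 * mb + 7) | (val x < 2 * mb)%N].

(* Main.v *)
Require Import Defs.
From mathcomp Require Import all_boot all_order all_algebra all_fingroup.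
From mathcomp Require Import zify ring.
Set Implicit Arguments. Unset Strict Implicit. Unset Printing Implicit Defensive.
Import GRing.Theory Num.Theory.
Local Open Scope ring_scope.

Definition rem_at {T : Type} (i : nat) (s : seq T) := take i s ++ drop i.+1 s.

Definition W1 : 'I_3 := @Ordinal 3 0 isT.
Definition W2 : 'I_3 := @Ordinal 3 1 isT.
Definition W3 : 'I_3 := @Ordinal 3 2 isT.
Lemma V1E : V1 = W1. Proof. by apply: val_inj; rewrite /= inordK. Qed.
Lemma V2E : V2 = W2. Proof. by apply: val_inj; rewrite /= inordK. Qed.
Lemma V3E : V3 = W3. Proof. by apply: val_inj; rewrite /= inordK. Qed.
Definition L1 : 'I_3 * 'I_3 := (W1, W1).
Definition E1 : 'I_3 * 'I_3 := (W1, W2).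
Definition Ef : 'I_3 * 'I_3 := (W2, W3).
Definition Eg : 'I_3 * 'I_3 := (W3, W1).
Definition Eh : 'I_3 * 'I_3 := (W1, W3).
Definition Ei : 'I_3 * 'I_3 := (W3, W2).
Definition L3 : 'I_3 * 'I_3 := (W3, W3).
Definition S0 := [:: L1; E1; Ef; Eg; Eh; Ei; L3].

Fixpoint E (p : seq int) (n : nat) : int :=
  match p with [::] => 0 | c :: q => c + \sum_(m < n) E q m end.
Fixpoint padd (p q : seq int) : seq int :=
  match p, q with
  | [::], _ => q | _, [::] => p | c :: p', d :: q' => (c + d) :: padd p' q' end.
Definition pscale (s : int) (p : seq int) := map (fun x => s * x) p.
Fixpoint pshift (p : seq int) : seq int :=
  match p with [::] => [::] | c :: q => (c + head 0 q) :: pshift q end.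
Definition iszero (p : seq int) := all (fun x => x == 0) p.
Definition psub p q := padd p (pscale (-1) q).

Lemma E_padd p q n : E (padd p q) n = E p n + E q n.
Proof.
elim: p q n => [|c p IH] [|d q] n /=; rewrite ?add0r ?addr0 //.
under eq_bigr do rewrite IH. by rewrite big_split /= addrACA.
Qed.
Lemma E_pscale s p n : E (pscale s p) n = s * E p n.
Proof.
elim: p n => [|c p IH] n /=; first by rewrite mulr0.
by rewrite mulrDr big_distrr /=; under eq_bigr do rewrite IH.
Qed.
Lemma E_psub p q n : E (psub p q) n = E p n - E q n.
Proof. by rewrite E_padd E_pscale mulN1r. Qed.
Lemma E_head p : E p 0 = head 0 p.
Proof. by case: p => [|c p] //=; rewrite big_ord0 addr0. Qed.
Lemma E_shift p n : E (pshift p) n = E p n.+1.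
Proof.
elim: p n => [|c p IH] n //=.
rewrite big_ord_recl /= E_head -addrA; congr (_ + (_ + _)).
by apply: eq_bigr => i _; rewrite IH.
Qed.
Lemma E_zero p n : iszero p -> E p n = 0.
Proof.
elim: p n => [|c p IH] n //= /andP [/eqP -> z]; rewrite add0r big1 // => i _; exact: IH.
Qed.

Fixpoint lookup (v : 'I_3) (S : seq ('I_3 * 'I_3)) (t : seq (('I_3 * seq ('I_3 * 'I_3)) * seq int)) :=
  match t with [::] => [::] | (k, p) :: t' => if k == (v, S) then p else lookup v S t' end.

Fixpoint subs {T : Type} (s : seq T) : seq (seq T) :=
  match s with [::] => [:: [::]] | x :: s' => let r := subs s' in [seq x :: t | t <- r] ++ r end.
Definition table : seq (('I_3 * seq ('I_3 * 'I_3)) * seq int) := [::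
  ((W1, [:: ]), [:: Posz 1]);
  ((W2, [:: ]), [:: Posz 1]);
  ((W1, [:: L1]), [:: Negz 0; Negz 0]);
  ((W2, [:: L1]), [:: Posz 0; Negz 0]);
  ((W1, [:: E1]), [:: Posz 1; Posz 1]);
  ((W2, [:: E1]), [:: Posz 1; Posz 1]);
  ((W3, [:: Eg]), [:: Negz 0]);
  ((W3, [:: Ei]), [:: Posz 1]);
  ((W1, [:: L1; E1]), [:: Posz 1; Posz 3; Posz 2]);
  ((W2, [:: L1; E1]), [:: Posz 1; Posz 3; Posz 2]);
  ((W3, [:: L1; Eg]), [:: Negz 0; Negz 0]);
  ((W3, [:: L1; Ei]), [:: Posz 0; Posz 1]);
  ((W3, [:: E1; Eg]), [:: Negz 0; Negz 0]);
  ((W3, [:: E1; Ei]), [:: Posz 1; Posz 1]);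
  ((W1, [:: Ef; Eg]), [:: Posz 1; Posz 1]);
  ((W2, [:: Ef; Eg]), [:: Posz 1; Posz 1]);
  ((W1, [:: Ef; Ei]), [:: Posz 1; Posz 1]);
  ((W2, [:: Ef; Ei]), [:: Posz 1; Posz 1]);
  ((W1, [:: Eg; Eh]), [:: Negz 0; Negz 0]);
  ((W2, [:: Eg; Eh]), [:: Posz 0; Negz 0]);
  ((W3, [:: Eg; L3]), [:: Negz 0]);
  ((W1, [:: Eh; Ei]), [:: Posz 1; Posz 1]);
  ((W2, [:: Eh; Ei]), [:: Posz 1; Posz 1]);
  ((W3, [:: Ei; L3]), [:: Negz 0]);
  ((W3, [:: L1; E1; Eg]), [:: Posz 1; Posz 3; Posz 2]);
  ((W3, [:: L1; E1; Ei]), [:: Negz 0; Negz 2; Negz 1]);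
  ((W2, [:: L1; Ef; Eg]), [:: Negz 0; Negz 0]);
  ((W1, [:: L1; Ef; Ei]), [:: Negz 0; Negz 2; Negz 1]);
  ((W2, [:: L1; Ef; Ei]), [:: Posz 0; Negz 1; Negz 1]);
  ((W1, [:: L1; Eg; Eh]), [:: Posz 2; Posz 4; Posz 2]);
  ((W2, [:: L1; Eg; Eh]), [:: Posz 0; Posz 2; Posz 2]);
  ((W3, [:: L1; Eg; L3]), [:: Posz 1; Posz 1]);
  ((W1, [:: L1; Eh; Ei]), [:: Posz 1; Posz 1]);
  ((W2, [:: L1; Eh; Ei]), [:: Posz 1; Posz 1]);
  ((W3, [:: L1; Ei; L3]), [:: Posz 0; Posz 1]);
  ((W2, [:: E1; Ef; Eg]), [:: Posz 1; Posz 1]);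
  ((W1, [:: E1; Ef; Ei]), [:: Posz 1; Posz 3; Posz 2]);
  ((W2, [:: E1; Ef; Ei]), [:: Posz 2; Posz 4; Posz 2]);
  ((W1, [:: E1; Eg; Eh]), [:: Negz 0; Negz 2; Negz 1]);
  ((W2, [:: E1; Eg; Eh]), [:: Negz 0; Negz 2; Negz 1]);
  ((W3, [:: E1; Eg; L3]), [:: Negz 0; Negz 0]);
  ((W3, [:: E1; Ei; L3]), [:: Negz 0; Negz 0]);
  ((W1, [:: Ef; Eg; L3]), [:: Posz 1; Posz 1]);
  ((W2, [:: Ef; Eg; L3]), [:: Posz 1; Posz 1]);
  ((W1, [:: Ef; Ei; L3]), [:: Negz 0; Negz 0]);
  ((W2, [:: Ef; Ei; L3]), [:: Negz 0; Negz 0]);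
  ((W3, [:: Eg; Eh; Ei]), [:: Posz 1]);
  ((W1, [:: Eg; Eh; L3]), [:: Negz 0; Negz 0]);
  ((W2, [:: Eg; Eh; L3]), [:: Posz 0; Negz 0]);
  ((W1, [:: Eh; Ei; L3]), [:: Negz 0; Negz 0]);
  ((W2, [:: Eh; Ei; L3]), [:: Negz 0; Negz 0]);
  ((W1, [:: L1; E1; Ef; Eg]), [:: Posz 0; Posz 2; Posz 4; Posz 2]);
  ((W2, [:: L1; E1; Ef; Eg]), [:: Posz 1; Posz 3; Posz 4; Posz 2]);
  ((W1, [:: L1; E1; Ef; Ei]), [:: Posz 1; Posz 7; Posz 12; Posz 6]);
  ((W2, [:: L1; E1; Ef; Ei]), [:: Posz 2; Posz 10; Posz 14; Posz 6]);
  ((W1, [:: L1; E1; Eg; Eh]), [:: Negz 1; Negz 9; Negz 13; Negz 5]);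
  ((W2, [:: L1; E1; Eg; Eh]), [:: Negz 1; Negz 9; Negz 13; Negz 5]);
  ((W3, [:: L1; E1; Eg; L3]), [:: Negz 0; Negz 2; Negz 1]);
  ((W1, [:: L1; E1; Eh; Ei]), [:: Posz 2; Posz 6; Posz 6; Posz 2]);
  ((W2, [:: L1; E1; Eh; Ei]), [:: Posz 2; Posz 6; Posz 6; Posz 2]);
  ((W3, [:: L1; E1; Ei; L3]), [:: Negz 0; Negz 2; Negz 1]);
  ((W3, [:: L1; Ef; Eg; Ei]), [:: Posz 0; Posz 2; Posz 2]);
  ((W1, [:: L1; Ef; Eg; L3]), [:: Posz 2; Posz 4; Posz 2]);
  ((W2, [:: L1; Ef; Eg; L3]), [:: Posz 1; Posz 3; Posz 2]);
  ((W1, [:: L1; Ef; Ei; L3]), [:: Posz 1; Posz 1]);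
  ((W3, [:: L1; Eg; Eh; Ei]), [:: Negz 0; Negz 2; Negz 1]);
  ((W1, [:: L1; Eh; Ei; L3]), [:: Negz 0; Negz 2; Negz 1]);
  ((W2, [:: L1; Eh; Ei; L3]), [:: Negz 0; Negz 2; Negz 1]);
  ((W3, [:: E1; Ef; Eg; Ei]), [:: Posz 0; Posz 2; Posz 2]);
  ((W2, [:: E1; Ef; Eg; L3]), [:: Posz 1; Posz 1]);
  ((W1, [:: E1; Ef; Ei; L3]), [:: Negz 0; Negz 2; Negz 1]);
  ((W2, [:: E1; Ef; Ei; L3]), [:: Negz 1; Negz 3; Negz 1]);
  ((W3, [:: E1; Eg; Eh; Ei]), [:: Negz 0; Negz 2; Negz 1]);
  ((W1, [:: E1; Eg; Eh; L3]), [:: Negz 0; Negz 2; Negz 1]);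
  ((W2, [:: E1; Eg; Eh; L3]), [:: Negz 0; Negz 2; Negz 1]);
  ((W1, [:: Ef; Eg; Eh; Ei]), [:: Posz 1; Posz 1]);
  ((W2, [:: Ef; Eg; Eh; Ei]), [:: Posz 1; Posz 1]);
  ((W3, [:: Ef; Eg; Ei; L3]), [:: Negz 1; Negz 1]);
  ((W3, [:: Eg; Eh; Ei; L3]), [:: Negz 1; Negz 1]);
  ((W3, [:: L1; E1; Ef; Eg; Ei]), [:: Posz 0; Negz 3; Negz 7; Negz 3]);
  ((W2, [:: L1; E1; Ef; Eg; L3]), [:: Negz 0; Negz 2; Negz 1]);
  ((W1, [:: L1; E1; Ef; Ei; L3]), [:: Negz 0; Negz 2; Negz 1]);
  ((W3, [:: L1; E1; Eg; Eh; Ei]), [:: Posz 0; Posz 4; Posz 8; Posz 4]);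
  ((W1, [:: L1; Ef; Eg; Eh; Ei]), [:: Posz 0; Posz 4; Posz 8; Posz 4]);
  ((W2, [:: L1; Ef; Eg; Eh; Ei]), [:: Posz 1; Posz 3; Posz 6; Posz 4]);
  ((W1, [:: E1; Ef; Eg; Eh; Ei]), [:: Posz 1; Negz 0; Negz 5; Negz 3]);
  ((W2, [:: E1; Ef; Eg; Eh; Ei]), [:: Posz 0; Negz 3; Negz 7; Negz 3]);
  ((W3, [:: E1; Ef; Eg; Ei; L3]), [:: Negz 1; Negz 1]);
  ((W2, [:: Ef; Eg; Eh; Ei; L3]), [:: Negz 1; Negz 1]);
  ((W1, [:: L1; E1; Ef; Eg; Eh; Ei]), [:: Posz 0; Negz 7; Negz 31; Negz 39; Negz 15]);
  ((W2, [:: L1; E1; Ef; Eg; Eh; Ei]), [:: Posz 0; Negz 11; Negz 39; Negz 43; Negz 15]);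
  ((W3, [:: L1; E1; Ef; Eg; Ei; L3]), [:: Posz 0; Posz 4; Posz 8; Posz 4]);
  ((W3, [:: L1; E1; Eg; Eh; Ei; L3]), [:: Posz 0; Posz 4; Posz 8; Posz 4]);
  ((W1, [:: L1; E1; Ef; Eg; Eh; Ei; L3]), [:: Posz 0; Posz 4; Posz 8; Posz 4])].

Definition P (v : 'I_3) (S : seq ('I_3 * 'I_3)) := lookup v S table.
Definition dE : 'I_3 * 'I_3 := (W1, W1).
Definition in0 (S : seq ('I_3 * 'I_3)) := count (fun e => e.2 == W1) S.
Definition out0 (S : seq ('I_3 * 'I_3)) := count (fun e => e.1 == W1) S.
Definition al (v : 'I_3) S := ((v == W1) + in0 S - out0 S)%N.
Definition be (v : 'I_3) S := (out0 S - ((v == W1) + in0 S))%N.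

Definition sumpoly v S :=
  foldr padd [::] [seq (if (nth dE S i).1 == v then
     pscale ((-1) ^+ (al v S + be v S + i)) (P (nth dE S i).2 (rem_at i S)) else [::])
     | i <- iota 0 (size S)].

Definition check (v : 'I_3) S :=
  let sp := sumpoly v S in
  if v == W1 then
    if (0 < al v S)%N then iszero (psub (psub (P W1 S) (P W2 S)) sp)
    else (head 0 (P W1 S) == head 0 sp) &&
         iszero (psub (psub (pshift (P W1 S)) (P W2 S)) (pshift sp))
  else if v == W2 then
    if (0 < be v S)%N then iszero (psub (psub (P W2 S) (P W1 S)) sp)
    else (head 0 (P W2 S) == head 0 sp + ((al v S == 0%N) && (S == [::]))%:R) &&
         iszero (psub (psub (pshift (P W2 S)) (P W1 S)) (pshift sp))
  else iszero (psub (P v S) sp).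

Definition Sset := subs S0.

Lemma Sset_closed : all (fun S => all (fun i => rem_at i S \in Sset) (iota 0 (size S))) Sset.
Proof. vm_compute. reflexivity. Qed.
Lemma Sset_check : all (fun S => all (fun v => check v S) [:: W1; W2; W3]) Sset.
Proof. vm_compute. reflexivity. Qed.
Lemma S0_in : S0 \in Sset.
Proof. vm_compute. reflexivity. Qed.

Fixpoint Ff (N : nat) (v : 'I_3) (a b : nat) (S : seq ('I_3 * 'I_3)) : int :=
  match N with
  | 0 => (v == W2)%:R
  | N'.+1 =>
    (if v == W1 then a%:R * Ff N' W2 a.-1 b S else 0)
    + (if v == W2 then b%:R * Ff N' W1 a b.-1 S else 0)
    + \sum_(i < size S) (if (nth dE S i).1 == v then
         (-1) ^+ (a + b + i) * Ff N' (nth dE S i).2 a b (rem_at i S) else 0)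
  end.
Definition Phi v a b S := Ff (a + b + size S) v a b S.

Lemma size_rem_at {T : Type} (s : seq T) i : (i < size s)%N -> size (rem_at i s) = (size s).-1.
Proof. move=> lt; rewrite /rem_at size_cat size_take size_drop lt; lia. Qed.

Lemma Phi_rec v a b S : Phi v a b S =
  ((a + b + size S == 0)%N && (v == W2))%:R
  + (if v == W1 then a%:R * Phi W2 a.-1 b S else 0)
  + (if v == W2 then b%:R * Phi W1 a b.-1 S else 0)
  + \sum_(i < size S) (if (nth dE S i).1 == v then
         (-1) ^+ (a + b + i) * Phi (nth dE S i).2 a b (rem_at i S) else 0).
Proof.
rewrite /Phi; case E: (a + b + size S)%N => [|N] /=.
  have [-> [-> /size0nil ->]] : a = 0%N /\ b = 0%N /\ size S = 0%N by lia.
  by rewrite big_ord0 /= !mul0r; case: ifP; case: ifP; rewrite ?addr0.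
rewrite add0r; congr (_ + _ + _).
- case: ifP => // _; case: a E => [|a] E; first by rewrite !mul0r.
  by have -> : (a.+1.-1 + b + size S = N)%N by lia.
- case: ifP => // _; case: b E => [|b] E; first by rewrite !mul0r.
  by have -> : (a + b.+1.-1 + size S = N)%N by lia.
- apply: eq_bigr => i _; case: ifP => // _.
  move: (ltn_ord i) => lti; rewrite size_rem_at //; have -> : (a + b + (size S).-1 = N)%N by lia.
  by [].
Qed.

Lemma count_rem_at {T : Type} (p : pred T) s i x0 : (i < size s)%N ->
  count p s = (count p (rem_at i s) + p (nth x0 s i))%N.
Proof.
move=> lt; rewrite -{1}(cat_take_drop i s) (drop_nth x0 lt) /rem_at !count_cat /=; lia.
Qed.

Lemma bal_rem v S i : (i < size S)%N -> (nth dE S i).1 = v ->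
  al (nth dE S i).2 (rem_at i S) = al v S /\ be (nth dE S i).2 (rem_at i S) = be v S.
Proof.
move=> lt hv; rewrite /al /be /in0 /out0.
rewrite (count_rem_at (fun e : 'I_3 * 'I_3 => e.2 == W1) dE lt).
rewrite (count_rem_at (fun e : 'I_3 * 'I_3 => e.1 == W1) dE lt) /= hv.
split; lia.
Qed.

Lemma E_foldr (T : Type) (f : T -> seq int) s n :
  E (foldr padd [::] (map f s)) n = \sum_(i <- s) E (f i) n.
Proof. by elim: s => [|x s IH] /=; rewrite ?big_nil ?big_cons ?E_padd ?IH. Qed.

Lemma E_sumpoly v S n : E (sumpoly v S) n =
  \sum_(i < size S) (if (nth dE S i).1 == v then
     (-1) ^+ (al v S + be v S + i) * E (P (nth dE S i).2 (rem_at i S)) n else 0).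
Proof.
rewrite /sumpoly E_foldr -(subn0 (size S)) -/(index_iota 0 _) big_mkord subn0.
by apply: eq_bigr => i _; case: ifP => _; rewrite ?E_pscale.
Qed.

Definition claim S v n := Phi v (n + al v S) (n + be v S) S =
  ((n + al v S)`! * (n + be v S)`!)%:R * E (P v S) n.

Lemma sign2 (x n : nat) : (-1) ^+ (x + n.*2) = (-1) ^+ x :> int.
Proof. by rewrite exprD -[(-1) ^+ n.*2]signr_odd odd_double expr0 mulr1. Qed.

Lemma ord3 (v : 'I_3) : [\/ v = W1, v = W2 | v = W3].
Proof.
case: v => [[|[|[|//]]]] H; [apply: Or31|apply: Or32|apply: Or33]; exact: val_inj.
Qed.

Lemma chkS S v : S \in Sset -> check v S.
Proof.
move=> HS; have /= := allP Sset_check S HS.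
by case: (ord3 v) => ->; case/and4P.
Qed.

Lemma closS S i : S \in Sset -> (i < size S)%N -> rem_at i S \in Sset.
Proof.
move=> HS lt; have /allP := allP Sset_closed S HS; apply; rewrite mem_iota; lia.
Qed.

Lemma W12 : (W1 == W2) = false. Proof. by []. Qed.
Lemma W21 : (W2 == W1) = false. Proof. by []. Qed.
Lemma W13 : (W1 == W3) = false. Proof. by []. Qed.
Lemma W31 : (W3 == W1) = false. Proof. by []. Qed.
Lemma W23 : (W2 == W3) = false. Proof. by []. Qed.
Lemma W32 : (W3 == W2) = false. Proof. by []. Qed.

Lemma factM a b : (0 < a)%N -> (a%:R * ((a.-1)`! * b)%:R : int) = (a`! * b)%:R.
Proof. by case: a => // a _; rewrite -natrM mulnA -factS. Qed.
Lemma factM2 a b : (0 < b)%N -> (b%:R * (a * (b.-1)`!)%:R : int) = (a * b`!)%:R.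
Proof. by case: b => // b _; rewrite -natrM mulnCA -factS. Qed.

Lemma spec_eq S v n : S \in Sset ->
  (forall S' v' n', S' \in Sset -> (n' + al v' S' + (n' + be v' S') + size S' < n + al v S + (n + be v S) + size S)%N -> claim S' v' n') ->
  \sum_(i < size S) (if (nth dE S i).1 == v then (-1) ^+ (n + al v S + (n + be v S) + i) *
      Phi (nth dE S i).2 (n + al v S) (n + be v S) (rem_at i S) else 0)
  = ((n + al v S)`! * (n + be v S)`!)%:R * E (sumpoly v S) n.
Proof.
move=> HS IH; rewrite E_sumpoly big_distrr /=; apply: eq_bigr => i _.
case: eqP => [hv|]; last by rewrite mulr0.
have lti := ltn_ord i.
have [ha hb] := bal_rem lti hv.
have := IH _ (nth dE S i).2 n (closS HS lti); rewrite /claim ha hb => ->; last first.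
  by rewrite size_rem_at // ltn_add2l prednK // (leq_ltn_trans _ lti).
have -> : (n + al v S + (n + be v S) + i = al v S + be v S + i + n.*2)%N by rewrite -addnn; lia.
by rewrite sign2 mulrCA.
Qed.

Lemma step S v n : S \in Sset ->
  (forall S' v' n', S' \in Sset -> (n' + al v' S' + (n' + be v' S') + size S' < n + al v S + (n + be v S) + size S)%N -> claim S' v' n') ->
  claim S v n.
Proof.
move=> HS IH; have Hsp := spec_eq HS IH.
have chk := chkS v HS.
rewrite /claim Phi_rec Hsp; clear Hsp.
case: (ord3 v) => Hv; subst v; rewrite /check ?eqxx ?W12 ?W21 ?W13 ?W31 ?W23 ?W32 /= in chk *.
-
  rewrite andbF /= add0r addr0.
  case: ifP chk => hal chk.
  + have := E_zero n chk; rewrite !E_psub => /eqP; rewrite subr_eq0 subr_eq => /eqP ->.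
    have [h1 h2] : al W2 S = (al W1 S).-1 /\ be W2 S = be W1 S.
      by move: hal; rewrite /al /be eqxx W21 /=; lia.
    have -> : ((n + al W1 S).-1 = n + (al W1 S).-1)%N by lia.
    have := IH S W2 n HS; rewrite /claim h1 h2 => ->; last by lia.
    have -> : (n + (al W1 S).-1 = (n + al W1 S).-1)%N by lia.
    by rewrite mulrA factM ?mulrDr //; lia.
  + case/andP: chk => /eqP hd chk.
    have hal0 : al W1 S = 0%N by move: hal; case: (al W1 S).
    have [h1 h2] : al W2 S = 0%N /\ be W2 S = (be W1 S).+1.
      by move: hal; rewrite /al /be eqxx W21 /=; lia.
    case: n IH => [|m] IH.
      by rewrite !add0n hal0 mul0r add0r !E_head hd.
    have := E_zero m chk; rewrite !E_psub !E_shift => /eqP; rewrite subr_eq0 subr_eq => /eqP ->.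
    rewrite hal0 !addn0 /=.
    have -> : (m.+1 + be W1 S = m + (be W1 S).+1)%N by lia.
    have := IH S W2 m HS; rewrite /claim h1 h2 addn0 => ->; last by lia.
    have -> : (m + (be W1 S).+1 = m.+1 + be W1 S)%N by lia.
    by rewrite mulrA (@factM m.+1) // mulrDr addrC.
-
  rewrite andbT addr0.
  case: ifP chk => hbe chk.
  + have := E_zero n chk; rewrite !E_psub => /eqP; rewrite subr_eq0 subr_eq => /eqP ->.
    have [h1 h2] : al W1 S = al W2 S /\ be W1 S = (be W2 S).-1.
      by move: hbe; rewrite /al /be eqxx W21 /=; lia.
    have -> : (n + al W2 S + (n + be W2 S) + size S == 0)%N = false by lia.
    have -> : ((n + be W2 S).-1 = n + (be W2 S).-1)%N by lia.
    have := IH S W1 n HS; rewrite /claim h1 h2 => ->; last by lia.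
    have -> : (n + (be W2 S).-1 = (n + be W2 S).-1)%N by lia.
    by rewrite add0r mulrA factM2 ?mulrDr //; lia.
  + case/andP: chk => /eqP hd chk.
    have hbe0 : be W2 S = 0%N by move: hbe; case: (be W2 S).
    have [h1 h2] : al W1 S = (al W2 S).+1 /\ be W1 S = 0%N.
      by move: hbe; rewrite /al /be eqxx W21 /=; lia.
    case: n IH => [|m] IH.
      rewrite !add0n hbe0 mul0r addr0 !E_head hd fact0 muln1 mulrDr addrC; congr (_ + _).
      have -> : (al W2 S + 0 + size S == 0)%N = (al W2 S == 0%N) && (S == [::]).
        by rewrite addn0 addn_eq0 size_eq0.
      by case: (al W2 S) => [|k]; case: (S == [::]) => /=; rewrite ?mulr0 ?mulr1.
    have -> : (m.+1 + al W2 S + (m.+1 + be W2 S) + size S == 0)%N = false by lia.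
    have := E_zero m chk; rewrite !E_psub !E_shift => /eqP; rewrite subr_eq0 subr_eq => /eqP ->.
    rewrite hbe0 !addn0 /=.
    have -> : (m.+1 + al W2 S = m + (al W2 S).+1)%N by lia.
    have := IH S W1 m HS; rewrite /claim h1 h2 addn0 => ->; last by lia.
    have -> : (m + (al W2 S).+1 = m.+1 + al W2 S)%N by lia.
    by rewrite add0r mulrA (@factM2 _ m.+1) // mulrDr; exact: addrC.
-
  have := E_zero n chk; rewrite !E_psub => /eqP; rewrite subr_eq0 => /eqP ->.
  by rewrite andbF /= !add0r.
Qed.

Lemma sound S v n : S \in Sset -> claim S v n.
Proof.
move=> HS.
suff H : forall K S v n, S \in Sset -> (n + al v S + (n + be v S) + size S <= K)%N -> claim S v n.
  exact: (H _ S v n HS (leqnn _)).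
elim=> [|K IHK] S' v' n' HS' HK; apply: step => // S2 v2 n2 HS2 lt2.
  by exfalso; lia.
by apply: IHK => //; lia.
Qed.

Lemma lift_perm_ex n (s : 'S_n.+1) i : exists t, s = lift_perm i (s i) t.
Proof.
pose f k := odflt k (unlift (s i) (s (lift i k))).
have fK k : lift (s i) (f k) = s (lift i k).
  rewrite /f; have:= neq_lift i k.
  by rewrite -(can_eq (permK s)) => /unlift_some[] ? ? ->.
have inj_f : injective f.
  by move=> a b /(congr1 (lift (s i))); rewrite !fK => /perm_inj /lift_inj.
exists (perm inj_f); apply/permP => k; case: (unliftP i k) => [k'|] ->.
  by rewrite lift_perm_lift permE fK.
by rewrite lift_perm_id.
Qed.

Lemma sum_lift_perm (R : nmodType) n (F : 'S_n.+1 -> R) i j :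
  \sum_(s : 'S_n.+1 | s i == j) F s = \sum_(t : 'S_n) F (lift_perm i j t).
Proof.
rewrite (reindex (lift_perm i j)); last first.
  pose ulsf i' (s : 'S_n.+1) k := odflt k (unlift (s i') (s (lift i' k))).
  have ulsfK i' (s : 'S_n.+1) k: lift (s i') (ulsf i' s k) = s (lift i' k).
    rewrite /ulsf; have:= neq_lift i' k.
    by rewrite -(can_eq (permK s)) => /unlift_some[] ? ? ->.
  have inj_ulsf: injective (ulsf i _).
    move=> s; apply: can_inj (ulsf (s i) s^-1%g) _ => k'.
    by rewrite {1}/ulsf ulsfK !permK liftK.
  exists (fun s => perm (inj_ulsf s)) => [s _ | s].
    by apply/permP=> k'; rewrite permE /ulsf lift_perm_lift lift_perm_id liftK.
  move/(s _ =P _) => si0; apply/permP=> k.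
  case: (unliftP i k) => [k'|] ->; rewrite ?lift_perm_id //.
  by rewrite lift_perm_lift -si0 permE ulsfK.
by apply: eq_bigl => t; rewrite lift_perm_id eqxx.
Qed.

Definition invn n (s : 'S_n) : nat :=
  \sum_(p < n) \sum_(q < n) ((p < q) && (s q < s p))%N.

Lemma bump_ltn j x y : (bump j x < bump j y)%N = (x < y)%N.
Proof. rewrite /bump; case: (leqP j x); case: (leqP j y) => /=; lia. Qed.
Lemma bump_lt j x : (bump j x < j)%N = (x < j)%N.
Proof. rewrite /bump; case: (leqP j x) => /=; lia. Qed.

Lemma sum_lt n j : (\sum_(y < n) (y < j)%N)%N = minn j n.
Proof.
elim: n => [|n IH]; first by rewrite big_ord0; lia.
rewrite big_ord_recr /= IH; case: (ltnP n j) => /=; lia.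
Qed.

Lemma invn_lift n (j : 'I_n.+1) (t : 'S_n) : invn (lift_perm ord0 j t) = (j + invn t)%N.
Proof.
rewrite /invn big_ord_recl; congr (_ + _)%N.
  rewrite big_ord_recl /= add0n.
  under eq_bigr => q _ do rewrite lift_perm_lift lift_perm_id /= bump_lt.
  rewrite (reindex_inj (@perm_inj _ t^-1)) /=.
  under eq_bigr => q _ do rewrite permKV.
  by rewrite sum_lt; have := ltn_ord j; lia.
apply: eq_bigr => p _; rewrite big_ord_recl /= add0n.
apply: eq_bigr => q _; rewrite !lift_perm_lift /= !bump_ltn.
by [].
Qed.

Lemma odd_perm_invn n (s : 'S_n) : odd_perm s = odd (invn s).
Proof.
elim: n s => [|n IH] s.
  have -> : s = 1%g by apply/permP => [[]].
  by rewrite odd_perm1 /invn big_ord0.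
have [t ->] := lift_perm_ex s ord0.
by rewrite odd_lift_perm invn_lift oddD IH.
Qed.

Lemma sorted_enum_ord k : sorted (fun x y : 'I_k => (x < y)%N) (enum 'I_k).
Proof.
have := iota_ltn_sorted 0 k.
rewrite -val_enum_ord sorted_map.
by [].
Qed.
Lemma sorted_enum_set k (M : {set 'I_k}) : sorted (fun x y : 'I_k => (x < y)%N) (enum M).
Proof.
have -> : enum M = filter (mem M) (enum 'I_k) by rewrite enumT.
apply: sorted_filter; first by move=> y x z; exact: ltn_trans.
exact: sorted_enum_ord.
Qed.

Lemma enum_val_ltn k (M : {set 'I_k}) (g h : 'I_#|M|) :
  (enum_val g < enum_val h)%N = (g < h)%N.
Proof.
have srt := sorted_enum_set M.
have mono : forall g h : 'I_#|M|, (g < h)%N -> (enum_val g < enum_val h)%N.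
  move=> g' h' lt; have e1 := enum_val_nth (enum_val g') h'; have e2 := enum_val_nth (enum_val g') g'; rewrite e1 {1}e2.
  apply: (sorted_ltn_nth _ _ srt) => //; [by move=> y x z; exact: ltn_trans|by rewrite inE -cardE; exact: ltn_ord|by rewrite inE -cardE; exact: ltn_ord].
case: (ltngtP g h) => H; first exact: mono.
  by apply/negbTE; rewrite -leqNgt ltnW // mono.
have -> : g = h by exact: val_inj.
by rewrite !ltnn.
Qed.

Definition rr_fun k (tau : 'S_k) (M : {set 'I_k}) (g : 'I_#|M|) : 'I_#|M| :=
    insubd g (#|[set h : 'I_#|M| | (val (tau (enum_val h)) <= val (tau (enum_val g)))%N]|.-1).
Arguments rr_fun {k} tau M g.

Lemma rr_fun_ltn k (tau : 'S_k) (M : {set 'I_k}) (g h : 'I_#|M|) :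
  (rr_fun tau M g < rr_fun tau M h)%N = (tau (enum_val g) < tau (enum_val h))%N.
Proof.
pose rk (g : 'I_#|M|) := #|[set h : 'I_#|M| | (val (tau (enum_val h)) <= val (tau (enum_val g)))%N]|.
have rk_pos g' : (0 < rk g')%N by apply/card_gt0P; exists g'; rewrite inE.
have rk_le g' : (rk g' <= #|M|)%N by rewrite -[X in (_ <= X)%N](card_ord #|M|) max_card.
have val_f g' : val (rr_fun tau M g') = (rk g').-1.
  rewrite /rr_fun val_insubd -/(rk g'); case: ifP => //; have := rk_pos g'; have := rk_le g'; lia.
rewrite !val_f; case: (ltnP (tau (enum_val g)) (tau (enum_val h))) => H.
  have : (rk g < rk h)%N.
    apply: proper_card; apply/properP; split.
      by apply/subsetP => x; rewrite !inE => /leq_trans; apply; exact: ltnW.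
    by exists h; rewrite !inE // -ltnNge.
  by have := rk_pos g; lia.
have : (rk h <= rk g)%N.
  by apply: subset_leq_card; apply/subsetP => x; rewrite !inE => /leq_trans; apply.
by have := rk_pos h; lia.
Qed.

Lemma rr_fun_inj k (tau : 'S_k) (M : {set 'I_k}) : injective (rr_fun tau M).
Proof.
move=> g h e.
case: (ltngtP (tau (enum_val g)) (tau (enum_val h))) => H.
- by move: H; rewrite -rr_fun_ltn e ltnn.
- by move: H; rewrite -rr_fun_ltn e ltnn.
- by apply: enum_val_inj; apply: (@perm_inj _ tau); apply: val_inj.
Qed.

Lemma restr_rankE k (tau : 'S_k) (M : {set 'I_k}) g : restr_rank tau M g = rr_fun tau M g.
Proof.
have -> : restr_rank tau M = perm_of_fun (rr_fun tau M) by [].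
rewrite /perm_of_fun; case: injectiveP => [H|H]; first by rewrite permE.
by exfalso; apply: H; exact: rr_fun_inj.
Qed.

Lemma invn_restr k (tau : 'S_k) (M : {set 'I_k}) :
  invn (restr_rank tau M) = (\sum_(x in M) \sum_(y in M) ((x < y) && (tau y < tau x)))%N.
Proof.
rewrite /invn [RHS]big_enum_val; apply: eq_bigr => g _; rewrite [RHS]big_enum_val.
by apply: eq_bigr => h _; rewrite !restr_rankE !rr_fun_ltn enum_val_ltn.
Qed.

Definition Ncnt k (B : {set 'I_k}) (pi : 'S_k) : nat :=
  \sum_(x < k) \sum_(y < k) ((x < y) && (pi y < pi x) && ~~((x \in B) && (y \in B)))%N.

Lemma term_sign k (s : 'S_k) (B : {set 'I_k}) :
  sgnp s * sgnp (restr_rank (s^-1)%g B) = (-1) ^+ Ncnt B (s^-1)%g.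
Proof.
set IB := (\sum_(x < k) \sum_(y < k) ((x < y) && ((s^-1)%g y < (s^-1)%g x) && ((x \in B) && (y \in B))))%N.
have h1 : invn (s^-1)%g = (Ncnt B (s^-1)%g + IB)%N.
  rewrite /invn /Ncnt /IB -big_split; apply: eq_bigr => x _; rewrite -big_split.
  by apply: eq_bigr => y _; case: (x < y)%N; case: (_ < _)%N; case: (x \in B); case: (y \in B).
have h2 : invn (restr_rank (s^-1)%g B) = IB.
  rewrite invn_restr /IB big_mkcond; apply: eq_bigr => x _; rewrite big_mkcond.
  case: (x \in B) => /=.
    by apply: eq_bigr => y _; case: (y \in B); rewrite ?andbT ?andbF.
  by rewrite big1 // => y _; rewrite andbF.
rewrite /sgnp -(odd_permV s) !odd_perm_invn h1 h2 !signr_odd -exprD -addnA addnn.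
by rewrite exprD -[(-1) ^+ IB.*2]signr_odd odd_double expr0 mulr1.
Qed.

Fixpoint TL {V : eqType} (t : V) (N : nat) (v : V) (L : seq ((V * V) * bool)) : int :=
  match N with
  | 0 => (v == t)%:R
  | N'.+1 => \sum_(0 <= i < size L)
      (if (nth (v, v, false) L i).1.1 == v then
         (-1) ^+ (\sum_(0 <= x < i) ~~ ((nth (v, v, false) L x).2 && (nth (v, v, false) L i).2))%N
         * TL t N' (nth (v, v, false) L i).1.2 (rem_at i L)
       else 0)
  end.

Definition Ptrail0 (V : finType) (k : nat) (G : drgraph V k) (s : 'S_k) : bool :=
  Ptrail G s && ((k == 0%N) ==> (sroot G == troot G)).

Definition Gj (V : finType) k (G : drgraph V k.+1) (j : 'I_k.+1) : drgraph V k :=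
  DRGraph (fun x => src G (lift j x)) (fun x => tgt G (lift j x)) (tgt G j) (troot G).
Definition Bj k (B : {set 'I_k.+1}) (j : 'I_k.+1) : {set 'I_k} := [set x | lift j x \in B].

Lemma forall_ord0 n (P : pred 'I_n.+1) : [forall p : 'I_n.+1, (val p == 0%N) ==> P p] = P ord0.
Proof.
apply/forallP/idP => [H|H p]; first exact: (implyP (H ord0)).
by apply/implyP => /eqP p0; have -> : p = ord0 by apply: val_inj.
Qed.

Lemma forall_ordmax n (P : pred 'I_n.+1) : [forall p : 'I_n.+1, (val p == n) ==> P p] = P ord_max.
Proof.
apply/forallP/idP => [H|H p]; first exact: (implyP (H ord_max)).
by apply/implyP => /eqP p0; have -> : p = ord_max by apply: val_inj.
Qed.

Lemma forall_succ n (R : 'I_n.+2 -> 'I_n.+2 -> bool) :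
  [forall p : 'I_n.+2, forall q : 'I_n.+2, (val q == (val p).+1) ==> R p q] =
  R ord0 (lift ord0 ord0) && [forall p : 'I_n.+1, forall q : 'I_n.+1, (val q == (val p).+1) ==> R (lift ord0 p) (lift ord0 q)].
Proof.
apply/idP/andP => [H|[H0 H]].
  split; first by move/forallP: H => /(_ ord0) /forallP /(_ (lift ord0 ord0)) /implyP; apply.
  apply/forallP => p; apply/forallP => q; apply/implyP => e.
  by move/forallP: H => /(_ (lift ord0 p)) /forallP /(_ (lift ord0 q)) /implyP; apply.
apply/forallP => p; apply/forallP => q; apply/implyP => /eqP e.
case: (unliftP ord0 p) => [p'|] Hp.
  case: (unliftP ord0 q) => [q'|] Hq.
    subst; move/forallP: H => /(_ p') /forallP /(_ q') /implyP; apply.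
    by apply/eqP; move: e; rewrite /= /bump; lia.
  by subst q; move: e; rewrite Hp /= /bump; lia.
subst p; have -> // : q = lift ord0 ord0 by apply: val_inj; rewrite /= e.
Qed.

Lemma Ptrail_lift (V : finType) k (G : drgraph V k.+1) j (t : 'S_k) :
  Ptrail G (lift_perm ord0 j t) = (src G j == sroot G) && Ptrail0 (Gj G j) t.
Proof.
rewrite /Ptrail0 /Ptrail forall_ord0 forall_ordmax lift_perm_id.
case: k G j t => [|k] G j t.
  have -> : (ord_max : 'I_1) = ord0 by apply: val_inj.
  rewrite lift_perm_id /=.
  have -> : [forall p : 'I_1, forall q : 'I_1, (val q == (val p).+1) ==>
     (src G (lift_perm ord0 j t q) == tgt G (lift_perm ord0 j t p))].
    by apply/forallP => p; apply/forallP => q; rewrite !ord1.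
  have F0 : forall P : pred 'I_0, [forall p, P p] by move=> P; apply/forallP => [[]].
  by rewrite !F0 /= andbT.
rewrite forall_succ forall_ord0 forall_ordmax /=.
have -> : (ord_max : 'I_k.+2) = lift ord0 ord_max by apply: val_inj.
rewrite !lift_perm_lift lift_perm_id andbT.
under eq_forallb => p do under eq_forallb => q do rewrite !lift_perm_lift.
by case: (src G j == sroot G); case: (src G _ == tgt G j); case: (tgt G _ == troot G).
Qed.

Lemma Ncnt_lift k (B : {set 'I_k.+1}) (j : 'I_k.+1) (r : 'S_k) :
  Ncnt B (lift_perm j ord0 r) =
  (\sum_(x < k.+1) ((x < j) && ~~((x \in B) && (j \in B))) + Ncnt (Bj B j) r)%N.
Proof.
rewrite /Ncnt exchange_big (bigD1_ord j) //=; congr (_ + _)%N.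
  apply: eq_bigr => x _; rewrite lift_perm_id.
  case: (ltnP x j) => //= xj.
  case: (unliftP j x) => [x'|] Hx; last by move: xj; rewrite Hx ltnn.
  by rewrite Hx lift_perm_lift.
rewrite [RHS]exchange_big; apply: eq_bigr => y _.
rewrite (bigD1_ord j) //= lift_perm_id ltn0 andbF add0n.
apply: eq_bigr => x _; rewrite !lift_perm_lift /= !bump_ltn !inE.
by [].
Qed.

Lemma Ptrail0S (V : finType) k (G : drgraph V k.+1) s : Ptrail0 G s = Ptrail G s.
Proof. by rewrite /Ptrail0 andbT. Qed.

Definition Tg (V : finType) k (G : drgraph V k) (B : {set 'I_k}) : int :=
  \sum_(s : 'S_k | Ptrail0 G s) (-1) ^+ Ncnt B (s^-1)%g.

Lemma Tg_rec (V : finType) k (G : drgraph V k.+1) B :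
  Tg G B = \sum_(j < k.+1) (if src G j == sroot G then
     (-1) ^+ (\sum_(x < k.+1) ((x < j) && ~~((x \in B) && (j \in B))))%N * Tg (Gj G j) (Bj B j)
     else 0).
Proof.
rewrite /Tg big_mkcond (partition_big (fun s : 'S_k.+1 => s ord0) xpredT) //=.
apply: eq_bigr => j _.
rewrite (eq_bigr (fun s : 'S_k.+1 => if Ptrail G s then (-1) ^+ Ncnt B (s^-1)%g else 0)); last first.
  by move=> s _; rewrite Ptrail0S.
rewrite sum_lift_perm.
rewrite (eq_bigr (fun t => if (src G j == sroot G) && Ptrail0 (Gj G j) t then
   (-1) ^+ (\sum_(x < k.+1) ((x < j) && ~~((x \in B) && (j \in B))) + Ncnt (Bj B j) (t^-1)%g)%N else 0)); last first.
  by move=> t _; rewrite Ptrail_lift lift_permV Ncnt_lift.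
case: (src G j == sroot G) => /=.
  rewrite mulr_sumr [RHS]big_mkcond; apply: eq_bigr => t _.
  by case: ifP => _; rewrite ?mulr0 // exprD.
by rewrite big1.
Qed.

Definition elist (V : finType) k (G : drgraph V k) (B : {set 'I_k}) :=
  [seq ((src G x, tgt G x), x \in B) | x <- enum 'I_k].

Lemma rem_at_enum (T : Type) n (f : 'I_n.+1 -> T) (j : 'I_n.+1) :
  rem_at j [seq f x | x <- enum 'I_n.+1] = [seq f (lift j x) | x <- enum 'I_n].
Proof.
have lj := ltn_ord j.
apply: (@eq_from_nth _ (f j)).
  by rewrite /rem_at size_cat size_take size_drop !size_map -!enumT !size_enum_ord lj; lia.
move=> i; rewrite /rem_at size_cat size_take size_drop !size_map -!enumT !size_enum_ord lj => li.
have li' : (i < n)%N by lia.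
pose i0 : 'I_n := Ordinal li'.
rewrite nth_cat size_take size_map size_enum_ord lj (nth_map i0) ?size_enum_ord //.
case: ifP => hij.
  rewrite nth_take // (nth_map j) ?size_enum_ord; last by lia.
  congr f; apply: val_inj; rewrite /= nth_enum_ord ?nth_enum_ord //=; last by lia.
  by rewrite /bump leqNgt hij.
rewrite nth_drop (nth_map j) ?size_enum_ord; last by lia.
congr f; apply: val_inj; rewrite /= nth_enum_ord ?nth_enum_ord //=; last by lia.
rewrite /bump leqNgt hij /=; lia.
Qed.

Lemma sum_widen (F : nat -> nat) n j : (j <= n)%N ->
  (\sum_(0 <= i < j) F i = \sum_(x < n) ((x < j) * F x))%N.
Proof.
move=> le; rewrite (big_nat_widen 0 j n) // big_mkord big_mkcond /=.
by apply: eq_bigr => x _; case: (x < j)%N; rewrite ?mul1n ?mul0n.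
Qed.

Lemma Tg_TL (V : finType) k (G : drgraph V k) B :
  Tg G B = TL (troot G) k (sroot G) (elist G B).
Proof.
elim: k G B => [|k IH] G B.
  rewrite /Tg /=.
  have F0 : forall P : pred 'I_0, [forall p, P p] by move=> P; apply/forallP => [[]].
  have P0 : forall s : 'S_0, Ptrail0 G s = (sroot G == troot G).
    by move=> s; rewrite /Ptrail0 /Ptrail !F0.
  rewrite (eq_bigl (fun _ => sroot G == troot G)) //.
  case: eqP => _ /=; last by rewrite big_pred0.
  rewrite (big_pred1 1%g) /=; first by rewrite /Ncnt big_ord0.
  by move=> s; apply/esym/eqP/permP => [[]].
rewrite Tg_rec /= /elist size_map size_enum_ord big_mkord.
apply: eq_bigr => j _.
set L := [seq _ | x <- enum 'I_k.+1].
have nthL : forall x : 'I_k.+1, nth (sroot G, sroot G, false) L x = ((src G x, tgt G x), x \in B).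
  by move=> x; rewrite /L (nth_map x) ?size_enum_ord // nth_ord_enum.
rewrite nthL /=; case: ifP => // _; congr (_ * _).
  congr (_ ^+ _).
  rewrite [RHS](sum_widen _ (ltnW (ltn_ord j))).
  apply: eq_bigr => x _; rewrite nthL.
  by case: (x < j)%N; rewrite ?mul1n ?mul0n.
rewrite IH /L rem_at_enum /=.
congr TL; apply: eq_map => x; by rewrite inE.
Qed.

Definition uE : ('I_3 * 'I_3) * bool := ((W1, W2), true).
Definition dE' : ('I_3 * 'I_3) * bool := ((W2, W1), true).
Definition spE (e : 'I_3 * 'I_3) : ('I_3 * 'I_3) * bool := (e, false).
Definition isud (e : ('I_3 * 'I_3) * bool) := (e == uE) || (e == dE').

Lemma rem_at_cat_l (T : Type) (s1 s2 : seq T) i : (i < size s1)%N ->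
  rem_at i (s1 ++ s2) = rem_at i s1 ++ s2.
Proof.
move=> lt; rewrite /rem_at take_cat drop_cat lt -catA; congr (_ ++ _).
case: ltnP => h //; have -> : (i.+1 - size s1 = 0)%N by lia.
by rewrite drop0 drop_oversize.
Qed.

Lemma rem_at_cat_r (T : Type) (s1 s2 : seq T) j :
  rem_at (size s1 + j) (s1 ++ s2) = s1 ++ rem_at j s2.
Proof.
rewrite /rem_at take_cat drop_cat ltnNge leq_addr /= addKn catA.
rewrite ltnNge (_ : (size s1 <= (size s1 + j).+1)%N) /=; last by lia.
by rewrite -addnS addKn.
Qed.

Lemma map_rem_at (T U : Type) (f : T -> U) s j : map f (rem_at j s) = rem_at j (map f s).
Proof. by rewrite /rem_at map_cat map_take map_drop. Qed.

Lemma all_rem_at (T : eqType) (p : pred T) s i : all p s -> all p (rem_at i s).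
Proof.
move/allP=> H; apply/allP => x; rewrite /rem_at mem_cat => /orP [/mem_take|/mem_drop]; exact: H.
Qed.

Lemma size_ud P : all isud P -> size P = (count_mem uE P + count_mem dE' P)%N.
Proof.
elim: P => [|e P IH] //= /andP [he hP]; rewrite IH //.
have ud : (uE == dE') = false by [].
have du : (dE' == uE) = false by [].
by case/orP: he => /eqP ->; rewrite /= ?eqxx ?ud ?du /=; lia.
Qed.

Lemma sum_ud (G : ('I_3 * 'I_3) * bool -> int) P : all isud P ->
  \sum_(e <- P) G e = (count_mem uE P)%:R * G uE + (count_mem dE' P)%:R * G dE'.
Proof.
elim: P => [|e P IH]; first by rewrite big_nil !mul0r addr0.
move=> /= /andP [he hP]; rewrite big_cons IH //.
have ud : (uE == dE') = false by [].
have du : (dE' == uE) = false by [].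
case/orP: he => /eqP ->; rewrite /= ?eqxx ?ud ?du /= !natrD !mulrDl ?mul1r ?mul0r ?add0r.
  by rewrite addrA.
by rewrite addrCA.
Qed.

Lemma TL_Phi N : forall P S v, (size P + size S)%N = N -> all isud P ->
  TL W2 N v (P ++ map spE S) = Phi v (count_mem uE P) (count_mem dE' P) S.
Proof.
elim: N => [|N IH] P S v hs hP.
  have [/size0nil -> /size0nil ->] : size P = 0%N /\ size S = 0%N by lia.
  by rewrite /Phi.
have sP := size_ud hP.
rewrite Phi_rec /= size_cat size_map.
have -> : ((count_mem uE P + count_mem dE' P + size S)%N == 0%N) = false by lia.
rewrite add0r (big_cat_nat _ (n := size P)) //=; last by lia.
congr (_ + _).
  set x0 := (v, v, false).
  pose G (e : ('I_3 * 'I_3) * bool) : int := if e.1.1 == v then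
     Phi e.1.2 (count_mem uE P - (e == uE)) (count_mem dE' P - (e == dE')) S else 0.
  transitivity (\sum_(e <- P) G e).
    rewrite (big_nth x0) big_nat [RHS]big_nat; apply: eq_bigr => i /andP [_ li].
    rewrite nth_cat li /G; case: ifP => // _.
    have hi : isud (nth x0 P i) by apply: (allP hP); exact: mem_nth.
    have -> : (\sum_(0 <= x < i) ~~ ((nth x0 (P ++ [seq spE i | i <- S]) x).2 &&
                  (nth x0 P i).2))%N = 0%N.
      rewrite big_nat big1 // => x /andP [_ lx]; rewrite nth_cat (ltn_trans lx li).
      have hx : isud (nth x0 P x) by apply: (allP hP); apply: mem_nth; exact: ltn_trans lx li.
      by case/orP: hx => /eqP ->; case/orP: hi => /eqP ->.
    rewrite expr0 mul1r rem_at_cat_l // IH; last first.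
    - exact: all_rem_at.
    - by rewrite size_rem_at //; lia.
    by rewrite (count_rem_at _ x0 li) (count_rem_at (pred1 dE') x0 li) !addnK.
  rewrite sum_ud // /G /=.
  have ud : (uE == dE') = false by [].
  have du : (dE' == uE) = false by [].
  rewrite !subn0 !subn1.
  case: (ord3 v) => ->; rewrite ?eqxx ?W12 ?W21 ?W13 ?W31 ?W23 ?W32 ?mulr0 ?addr0 ?add0r //.
rewrite (big_addn 0 _ (size P)) addKn big_mkord.
apply: eq_bigr => j _.
have lj := ltn_ord j.
rewrite nth_cat ltnNge leq_addl /= addnK (nth_map dE) //=.
case: ifP => // _.
have -> : (\sum_(0 <= x < j + size P) ~~ ((nth (v, v, false) (P ++ [seq spE i | i <- S]) x).2 && false))%N = (j + size P)%N.
  by under eq_bigr do rewrite andbF; rewrite sum_nat_const_nat muln1 subn0.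
rewrite [(j + size P)%N]addnC rem_at_cat_r -map_rem_at IH //; last by rewrite size_rem_at //; lia.
by rewrite sP addnC.
Qed.

Lemma Ssum_Tg (V : finType) k (G : drgraph V k) B : (0 < k)%N -> Ssum G B = Tg G B.
Proof.
move=> k0; rewrite /Ssum /Tg; apply: eq_big => s.
  by rewrite /Ptrail0; case: k k0 G B s => // k _ G B s; rewrite andbT.
by move=> _; exact: term_sign.
Qed.

Definition fG (mb n : nat) : ('I_3 * 'I_3) * bool :=
  if (n < 2 * mb)%N then (if odd n then dE' else uE) else spE (nth dE S0 (n - 2 * mb)).

Lemma elist_G3 mb : elist (G3 mb) (B3 mb) = map (fG mb) (iota 0 (2 * mb + 7)).
Proof.
rewrite /elist -val_enum_ord -map_comp; apply: eq_map => x /=.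
rewrite /G3_src /G3_tgt /fG inE.
case: ifP => hx.
  by case: (odd x); rewrite ?V1E ?V2E.
have := ltn_ord x; move: hx.
case h: (x - 2 * mb)%N => [|[|[|[|[|[|[|n]]]]]]] hx hlt; rewrite /= ?V1E ?V2E ?V3E //.
lia.
Qed.

Definition Pud mb := map (fG mb) (iota 0 (2 * mb)).

Lemma Pud_eq mb : Pud mb = map (fun n => if odd n then dE' else uE) (iota 0 (2 * mb)).
Proof. by apply/eq_in_map => n; rewrite mem_iota /fG => /andP [_ ->]. Qed.

Lemma Pud_props mb : [/\ all isud (Pud mb), count_mem uE (Pud mb) = mb & count_mem dE' (Pud mb) = mb].
Proof.
rewrite Pud_eq; elim: mb => [|mb [IH1 IH2 IH3]] //.
have -> : (2 * mb.+1 = 2 * mb + 2)%N by lia.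
rewrite iotaD map_cat all_cat count_cat count_cat IH1 IH2 IH3 /= add0n.
have -> : odd (2 * mb) = false by rewrite oddM.
have ud : (uE == dE') = false by [].
have du : (dE' == uE) = false by [].
rewrite /= ?eqxx ?ud ?du /=; split => //; lia.
Qed.

Lemma elist_split mb : elist (G3 mb) (B3 mb) = Pud mb ++ map spE S0.
Proof.
rewrite elist_G3 iotaD map_cat /Pud; congr (_ ++ _).
rewrite add0n -[X in iota X 7]addn0 iotaDl -map_comp.
have -> : map (fG mb \o addn (2 * mb)) (iota 0 7) = map (fun j => spE (nth dE S0 j)) (iota 0 7).
  apply/eq_in_map => j; rewrite mem_iota => _ /=.
  by rewrite /fG ltnNge leq_addr /= addKn.
by [].
Qed.

Lemma Ssum_Phi mb : Ssum (G3 mb) (B3 mb) = Phi W1 mb mb S0.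
Proof.
rewrite Ssum_Tg ?addn_gt0 ?orbT // Tg_TL elist_split /=.
have [h1 h2 h3] := Pud_props mb.
rewrite V1E V2E (TL_Phi (P := Pud mb) (S := S0)) //.
  by congr Phi; [exact: h2|exact: h3].
by rewrite /Pud size_map size_iota.
Qed.

Lemma PS0 : P W1 S0 = [:: Posz 0; Posz 4; Posz 8; Posz 4].
Proof. by vm_compute. Qed.
Lemma alS0 : al W1 S0 = 0%N. Proof. by vm_compute. Qed.
Lemma beS0 : be W1 S0 = 0%N. Proof. by vm_compute. Qed.

Lemma E_cons c p n : E (c :: p) n = c + \sum_(m < n) E p m.
Proof. by []. Qed.

Lemma EE3 m : E [:: Posz 4] m = 4.
Proof. by rewrite E_cons big1 ?addr0. Qed.
Lemma EE2 m : E [:: Posz 8; Posz 4] m = 8 + 4 * m%:R.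
Proof.
rewrite E_cons; under eq_bigr do rewrite EE3.
by rewrite sumr_const card_ord mulr_natr.
Qed.
Lemma EE1 m : E [:: Posz 4; Posz 8; Posz 4] m = 2 * (m%:R + 1) * (m%:R + 2).
Proof.
elim: m => [|m IH]; first by rewrite E_cons big_ord0 addr0; ring.
rewrite E_cons big_ord_recr addrA -E_cons IH EE2 /= -natr1; ring.
Qed.
Lemma EE0 n : E [:: Posz 0; Posz 4; Posz 8; Posz 4] n * 3 = 2 * n%:R * (n%:R + 1) * (n%:R + 2).
Proof.
elim: n => [|n IH]; first by rewrite E_cons big_ord0 addr0; ring.
rewrite E_cons big_ord_recr addrA -E_cons mulrDl IH EE1 /= -natr1; ring.
Qed.

Theorem lemma3p6 (mb : nat) (hmb : (1 <= mb)%N) :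
  (Ssum (G3 mb) (B3 mb))%:~R =
    (2%:R / 3%:R : rat) * mb%:R * (mb.+2)`!%:R * (mb`!)%:R.
Proof.
have := @sound S0 W1 mb S0_in; rewrite /claim alS0 beS0 !addn0 PS0 -Ssum_Phi => ->.
have he := EE0 mb.
set e := E _ mb in he *.
have he' : (e%:~R : rat) * 3 = 2 * mb%:R * (mb%:R + 1) * (mb%:R + 2).
  have := congr1 (fun z : int => z%:~R : rat) he; rewrite /= !rmorphM /= !rmorphD /=.
  by rewrite !rmorph_nat.
rewrite rmorphM /= rmorph_nat !factS !natrM -!natr1.
have -> : (e%:~R : rat) = 2 * mb%:R * (mb%:R + 1) * (mb%:R + 2) / 3.
  by rewrite -he' mulfK.
by field.
Qed.
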